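(* Let $(P,w)$ be a naturally labeled poset with $n$ elements and $\alpha$ a composition of $n$ with $\ell$ parts. For $\sigma\in\mathcal L^*_\alpha(P,w)$ define $f_\sigma:P\to[\ell]$ by $f_\sigma(x)=i$ for $x\in P_i^\alpha(\sigma)$. Then $\sigma\mapsto f_\sigma$ is a bijection from $\mathcal L^*_\alpha(P,w)$ to $\mathcal O^*_\alpha(P)$.
   Context: Compositions: $\alpha=(\alpha_1,\dots,\alpha_\ell)\vDash n$, blocks $B_i(\alpha)=\{\alpha_1+\dots+\alpha_{i-1}+1,\dots,\alpha_1+\dots+\alpha_i\}$. A labeled poset $(P,w)$ is a finite poset with bijection $w:P\to[n]$, naturally labeled if $x<_Py\Rightarrow w(x)<w(y)$. $\mathcal L(P,w)=\{\sigma\in\mathfrak S_n:\sigma^{-1}(w(x))<\sigma^{-1}(w(y))\text{ whenever }x<_Py\}$. $\sigma$ is $\alpha$-unimodal if on each block $[a,b]=B_i(\alpha)$, $\sigma_a>\dots>\sigma_k<\dots<\sigma_b$ for some $k$. $P_i^\alpha(\sigma)=\{w^{-1}(\sigma_j):j\in B_i(\alpha)\}$ with induced order. $\mathcal L^*_\alpha(P,w)$ is the set of $\alpha$-unimodal $\sigma\in\mathcal L(P,w)$ with every $P_i^\alpha(\sigma)$ having a unique minimal element. $\mathcal O^*_\alpha(P)$ is the set of surjections $f:P\to[\ell]$ with $x\le_Py\Rightarrow f(x)\le f(y)$, $|f^{-1}(i)|=\alpha_i$ for all $i$, and each fiber $f^{-1}(i)$ (induced subposet) having a unique minimal element. *)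

(* Defs.v *)
From mathcomp Require Import all_boot all_order all_fingroup.
Set Implicit Arguments. Unset Strict Implicit. Unset Printing Implicit Defensive.
Import Order.Theory.
Local Open Scope order_scope.

(* Conventions: positions 1..n of a permutation are 0..n-1 (type 'I_n),
   labels [n] are 'I_n, blocks B_1..B_l are indexed 0..l-1. *)

Section Defs.
Variables (d : Order.disp_t) (P : finPOrderType d) (n : nat).

Definition is_composition (alpha : seq nat) : Prop :=
  all (fun a => 0 < a)%N alpha /\ sumn alpha = n.

Definition psum (alpha : seq nat) (i : nat) : nat := sumn (take i alpha).

Definition in_block (alpha : seq nat) (i j : nat) : bool :=
  (psum alpha i <= j)%N && (j < psum alpha i.+1)%N.

Definition blk (alpha : seq nat) (j : nat) : nat :=
  find (fun i => in_block alpha i j) (iota 0 (size alpha)).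

Definition naturally_labeled (w : P -> 'I_n) : Prop :=
  forall x y : P, x < y -> (w x < w y)%N.

Definition lin_ext (w : P -> 'I_n) (s : {perm 'I_n}) : Prop :=
  forall x y : P, x < y -> ((s^-1)%g (w x) < (s^-1)%g (w y))%N.

Definition word (s : {perm 'I_n}) : nat -> nat :=
  fun j => nth 0%N [seq val (s i) | i <- enum 'I_n] j.

Definition unimodal_block (alpha : seq nat) (s : {perm 'I_n}) (i : nat) : Prop :=
  exists k : nat,
    [/\ (psum alpha i <= k)%N, (k < psum alpha i.+1)%N,
        (forall j, psum alpha i <= j -> j < k -> word s j.+1 < word s j)%N &
        (forall j, k <= j -> j.+1 < psum alpha i.+1 -> word s j < word s j.+1)%N].

Definition alpha_unimodal (alpha : seq nat) (s : {perm 'I_n}) : Prop :=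
  forall i, (i < size alpha)%N -> unimodal_block alpha s i.

Definition Pblock (w : P -> 'I_n) (alpha : seq nat) (s : {perm 'I_n}) (i : nat)
  : {set P} :=
  [set x | [exists j : 'I_n, in_block alpha i j && (w x == s j)]].

Definition unique_min (S : {set P}) : Prop :=
  #|[set x in S | [forall y in S, ~~ (y < x)]]| = 1%N.

Definition Lstar (w : P -> 'I_n) (alpha : seq nat) (s : {perm 'I_n}) : Prop :=
  [/\ lin_ext w s, alpha_unimodal alpha s &
      forall i, (i < size alpha)%N -> unique_min (Pblock w alpha s i)].

(* maps P -> [l] are encoded as nat-valued functions with values < l *)
Definition Ostar (alpha : seq nat) (f : {ffun P -> nat}) : Prop :=
  [/\ forall x, (f x < size alpha)%N,
      forall i, (i < size alpha)%N -> exists x, f x = i,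
      forall x y : P, x <= y -> (f x <= f y)%N,
      forall i, (i < size alpha)%N -> #|[set x | f x == i]| = nth 0%N alpha i &
      forall i, (i < size alpha)%N -> unique_min [set x | f x == i]].

Definition fsig (w : P -> 'I_n) (alpha : seq nat) (s : {perm 'I_n}) : {ffun P -> nat} :=
  [ffun x => blk alpha (val ((s^-1)%g (w x)))].

End Defs.

(* Main.v *)
Require Import Defs.
From mathcomp Require Import all_boot all_order all_fingroup.
From mathcomp Require Import zify.
From Stdlib Require Import Lia.
Set Implicit Arguments. Unset Strict Implicit. Unset Printing Implicit Defensive.

Lemma psumS (alpha : seq nat) i : psum alpha i.+1 = psum alpha i + nth 0 alpha i.
Proof.
rewrite /psum; elim: alpha i => [|a al IH] [|i] //=.
- by rewrite take0 addn0.
- by rewrite IH addnA.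
Qed.

Lemma psum_mono (alpha : seq nat) i j : i <= j -> psum alpha i <= psum alpha j.
Proof.
move=> /subnK <-; elim: (j - i) => [|k IH] //=.
by rewrite addSn psumS (leq_trans IH) // leq_addr.
Qed.

Lemma psum_size (alpha : seq nat) : psum alpha (size alpha) = sumn alpha.
Proof. by rewrite /psum take_size. Qed.

Lemma find_iota_eq (p : pred nat) m i : i < m -> p i -> (forall k, k < i -> ~~ p k) ->
  find p (iota 0 m) = i.
Proof.
move=> im pi hk.
have hs : has p (iota 0 m) by apply/hasP; exists i => //; rewrite mem_iota.
have fl : find p (iota 0 m) < m by rewrite -[X in _ < X](size_iota 0 m) -has_find.
have := nth_find 0 hs; rewrite nth_iota // add0n => pf.
case: (ltngtP (find p (iota 0 m)) i) => // [/hk|]; first by rewrite pf.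
move=> /(before_find 0); rewrite nth_iota // add0n pi //.
Qed.

Lemma blk_eq (alpha : seq nat) i j : i < size alpha -> in_block alpha i j -> blk alpha j = i.
Proof.
move=> isz hb; rewrite /blk; apply: find_iota_eq => // k ki.
apply/negP=> /andP[_ h]; move: hb => /andP[h2 _].
have := psum_mono alpha ki; lia.
Qed.

Lemma blk_spec (alpha : seq nat) j : j < sumn alpha ->
  blk alpha j < size alpha /\ in_block alpha (blk alpha j) j.
Proof.
move=> jn.
have hs : has (fun i => in_block alpha i j) (iota 0 (size alpha)).
  (* the last block index with psum <= j *)
  pose P' := fun i => j < psum alpha i.+1.
  have ex : exists i, P' i by exists (size alpha); rewrite /P' -psum_size in jn;
     apply: leq_trans jn (psum_mono _ (leqnSn _)).
  pose i0 := ex_minn ex.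
  case: (ex_minnP ex) => i Pi mi.
  apply/hasP; exists i.
    rewrite mem_iota add0n /= ltnNge; apply/negP => hi.
    have s0 : 0 < size alpha by case: (alpha) jn.
    have := mi (size alpha).-1; rewrite /P' prednK // psum_size => /(_ jn).
    move: hi s0; clear; lia.
  rewrite /in_block; apply/andP; split; last exact: Pi.
  case: i Pi mi => [|i] Pi mi; first by rewrite /psum take0.
  by rewrite leqNgt; apply/negP => /mi; rewrite ltnn.
split; first by rewrite /blk -[X in _ < X](size_iota 0 (size alpha)) -has_find.
have := nth_find 0 hs; rewrite nth_iota //; last by rewrite -[X in _ < X](size_iota 0 (size alpha)) -has_find.
Qed.

Lemma blk_mono (alpha : seq nat) j j' : j <= j' -> j' < sumn alpha -> blk alpha j <= blk alpha j'.
Proof.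
move=> jj' j'n; have jn : j < sumn alpha by apply: leq_ltn_trans j'n.
case: (blk_spec jn) => s1 /andP[h1 h2]; case: (blk_spec j'n) => s2 /andP[h3 h4].
rewrite leqNgt; apply/negP => lt.
have := psum_mono alpha lt; lia.
Qed.

Lemma blk_lt (alpha : seq nat) j j' : j < sumn alpha -> j' < sumn alpha ->
  blk alpha j < blk alpha j' -> j < j'.
Proof.
move=> jn j'n lt; rewrite ltnNge; apply/negP => le.
by have := blk_mono le jn; rewrite leqNgt lt.
Qed.

Lemma psum_lt_sum (alpha : seq nat) i : all (fun a => 0 < a) alpha -> i < size alpha ->
  psum alpha i < psum alpha i.+1 /\ psum alpha i.+1 <= sumn alpha.
Proof.
move=> /allP hpos isz; split.
  by rewrite psumS -[X in X < _]addn0 ltn_add2l hpos // mem_nth.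
by rewrite -psum_size psum_mono.
Qed.

Lemma wordE n (s : {perm 'I_n}) (j : 'I_n) : word s j = val (s j).
Proof.
rewrite /word (nth_map j); last by rewrite size_enum_ord.
by rewrite nth_ord_enum.
Qed.

Lemma count_interval_gen a b n : count (fun j => (a <= j) && (j < b)) (iota 0 n) = minn b n - a.
Proof.
elim: n => [|n IH]; first by rewrite /= minn0.
rewrite -addn1 iotaD count_cat IH /= add0n addn0.
case: (leqP a n) => h1; case: (ltnP n b) => h2 /=; lia.
Qed.

Lemma count_interval a b n : b <= n -> count (fun j => (a <= j) && (j < b)) (iota 0 n) = b - a.
Proof. by move=> bn; rewrite count_interval_gen (minn_idPl bn). Qed.

Lemma card_ord_pred n (p : pred nat) : #|[set j : 'I_n | p j]| = count p (iota 0 n).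
Proof.
rewrite cardsE cardE /enum_mem -val_enum_ord count_map size_filter -enumT.
by apply: eq_count => x.
Qed.

Import Order.Theory.

Lemma unique_min_below d (P : finPOrderType d) (S : {set P}) :
  unique_min S -> exists m, m \in S /\ forall x, x \in S -> (m <= x)%O.
Proof.
rewrite /unique_min => /eqP/cards1P[m hm].
have mS : m \in S.
  have : m \in [set m] by rewrite in_set1.
  by rewrite -hm inE => /andP[].
exists m; split => // x xS.
have cx : (x \in S) && (x <= x)%O by rewrite xS lexx.
case: (@arg_minnP _ x (fun y => (y \in S) && (y <= x)%O) (fun y => #|[set z | (z < y)%O]|) cx) => y /andP[yS yx] ymin.
have : y \in [set m].
  rewrite -hm inE yS /=; apply/forallP => z; apply/implyP => zS; apply/negP => zy.
  have := ymin z; rewrite zS (le_trans (ltW zy) yx) => /(_ isT).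
  apply/negP; rewrite -ltnNge; apply: proper_card; apply/properP; split.
    by apply/subsetP => t; rewrite !inE => tz; apply: lt_trans tz zy.
  by exists z; rewrite !inE ?ltxx.
by rewrite in_set1 => /eqP <-.
Qed.

Lemma Pblock_fiber d (P : finPOrderType d) (alpha : seq nat) (w : P -> 'I_(sumn alpha))
  (s : {perm 'I_(sumn alpha)}) i : i < size alpha ->
  Pblock w alpha s i = [set x | blk alpha ((s^-1)%g (w x)) == i].
Proof.
move=> isz; apply/setP => x; rewrite !inE; apply/existsP/eqP.
  by case=> j /andP[hb /eqP ->]; rewrite permK; apply: blk_eq.
move=> <-; exists ((s^-1)%g (w x)); rewrite permKV eqxx andbT.
by case: (blk_spec (ltn_ord ((s^-1)%g (w x)))).
Qed.

Lemma Lstar_incr d (P : finPOrderType d) (alpha : seq nat) (w : P -> 'I_(sumn alpha))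
  (s : {perm 'I_(sumn alpha)}) :
  bijective w -> naturally_labeled w -> Lstar w alpha s ->
  forall p q : 'I_(sumn alpha), blk alpha p = blk alpha q -> p < q -> val (s p) < val (s q).
Proof.
move=> [w' ww' w'w] natl [lin uni umin] p q bpq pq.
set i := blk alpha p.
have [isz hp] := blk_spec (ltn_ord p).
have hq : in_block alpha i q by rewrite /i bpq; case: (blk_spec (ltn_ord q)).
set a := psum alpha i.
set e := psum alpha i.+1.
have ae : a < e by move: hp => /andP[]; rewrite -/a -/e; apply: leq_ltn_trans.
have en : e <= sumn alpha by rewrite /e -psum_size psum_mono.
have an : a < sumn alpha by apply: leq_trans en.
pose A := Ordinal an.
have [m [mS mmin]] := unique_min_below (umin i isz).
have inS : forall j : 'I_(sumn alpha), in_block alpha i j -> w' (s j) \in Pblock w alpha s i.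
  by move=> j hj; rewrite inE; apply/existsP; exists j; rewrite hj w'w eqxx.
have AS : in_block alpha i A by rewrite /in_block /= leqnn.
have mA : m = w' (s A).
  apply/eqP; rewrite eq_le mmin ?inS //=.
  have h := mmin _ (inS _ AS); rewrite le_eqVlt in h; case/orP: h => [/eqP -> //|/lin].
  move: mS; rewrite Pblock_fiber // inE => /eqP bm.
  have [_ /andP[hm _]] := blk_spec (ltn_ord ((s^-1)%g (w m))).
  rewrite bm in hm; rewrite w'w permK /= -/a => lt; by move: lt; rewrite ltnNge hm.
have C : forall j, a <= j -> j < e -> a < j -> word s a < word s j.
  move=> j h1 h2 h3; have jn : j < sumn alpha by apply: leq_trans en.
  pose J := Ordinal jn.
  have hJ : in_block alpha i J by rewrite /in_block /= h1 h2.
  have -> : j = val J by []; have -> : a = val A by [].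
  rewrite !wordE; have h := mmin _ (inS _ hJ); rewrite le_eqVlt in h; case/orP: h => [/eqP|].
    rewrite mA => /(can_inj w'w) /perm_inj /(congr1 val) /= E; by rewrite E ltnn in h3.
  by move/natl; rewrite mA !w'w.
case: (uni i isz) => k [k1 k2 dec inc].
have ka : k = a.
  apply/eqP; rewrite eqn_leq k1 andbT -/a leqNgt; apply/negP => ak.
  have := dec a (leqnn _) ak; rewrite ltnNge => /negP; apply; apply: ltnW.
  by apply: C; rewrite ?leqnSn //; apply: leq_ltn_trans k2.
have inc' : forall j, a <= j -> j.+1 < e -> word s j < word s j.+1 by rewrite -ka.
have gen : forall t j, a <= j -> j + t.+1 < e -> word s j < word s (j + t.+1).
  move=> t j aj; elim: t => [|t IH] h; first by rewrite addn1 in h *; apply: inc'.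
  apply: ltn_trans (IH _) _; first by apply: ltn_trans h; rewrite ltn_add2l.
  have -> : j + t.+2 = (j + t.+1).+1 by rewrite addnS.
  apply: inc'; first by apply: leq_trans aj (leq_addr _ _).
  by rewrite -addnS.
have [hp1 hp2] := andP hp; have [hq1 hq2] := andP hq.
have qE : (q : nat) = p + (q - p.+1).+1 by rewrite addnS -addSn subnKC.
rewrite -!wordE qE; apply: gen => //; by rewrite -qE.
Qed.

Lemma incr_ge n (g : 'I_n -> 'I_n) : (forall p q : 'I_n, p < q -> g p < g q) ->
  forall p : 'I_n, p <= g p.
Proof.
move=> hg p; move: {2}(val p) (erefl (val p)) => k; elim: k p => [|k IH] p hp; first by rewrite hp.
have kn : k < n by have := ltn_ord p; rewrite hp => /ltnW.
have := hg (Ordinal kn) p; rewrite /= hp ltnSn => /(_ isT).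
exact: leq_ltn_trans (IH (Ordinal kn) erefl).
Qed.

Lemma incr_id n (g : 'I_n -> 'I_n) : (forall p q : 'I_n, p < q -> g p < g q) ->
  forall p : 'I_n, g p = p.
Proof.
move=> hg p; apply/val_inj/eqP; rewrite eqn_leq [X in _ && X]incr_ge // andbT.
pose h := fun x : 'I_n => rev_ord (g (rev_ord x)).
have hh : forall p q : 'I_n, p < q -> h p < h q.
  move=> x y xy; rewrite /h /=.
  have r : rev_ord y < rev_ord x.
    rewrite /=; have := ltn_ord y; move: xy; clear; move=> a b; lia.
  have := hg _ _ r; have := ltn_ord (g (rev_ord x)); clear; move=> a b; lia.
have := incr_ge hh (rev_ord p); rewrite /h /= rev_ordK /=.
have := ltn_ord p; have := ltn_ord (g p); clear; move=> a b; lia.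
Qed.

Lemma Lstar_inj d (P : finPOrderType d) (alpha : seq nat) (w : P -> 'I_(sumn alpha))
  (s1 s2 : {perm 'I_(sumn alpha)}) :
  bijective w -> naturally_labeled w -> Lstar w alpha s1 -> Lstar w alpha s2 ->
  fsig w alpha s1 = fsig w alpha s2 -> s1 = s2.
Proof.
move=> bw nl L1 L2 E; have [w' ww' w'w] := bw.
pose t := fun p => (s2^-1)%g (s1 p).
have bt : forall p, blk alpha (t p) = blk alpha p.
  move=> p; have := congr1 (fun f : {ffun P -> nat} => f (w' (s1 p))) E; rewrite /fsig !ffunE w'w permK.
  by move=> ->.
have tinc : forall p q : 'I_(sumn alpha), p < q -> t p < t q.
  move=> p q pq; have := blk_mono (ltnW pq) (ltn_ord q).
  rewrite leq_eqVlt => /orP[/eqP e|lt]; last by apply: (@blk_lt alpha); rewrite ?bt ?ltn_ord.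
  case: (ltngtP (t p) (t q)) => // [tq|tpq].
    have := Lstar_incr bw nl L2 (p:=t q) (q:=t p); rewrite !bt e => /(_ erefl tq).
    rewrite /t !permKV => lt1.
    have := Lstar_incr bw nl L1 e pq; by rewrite ltnNge ltnW.
  have /val_inj /perm_inj /perm_inj pqE : val (t p) = val (t q) by [].
  by rewrite pqE ltnn in pq.
apply/permP => p; have := incr_id tinc p; rewrite /t => h.
by rewrite -[in RHS]h permKV.
Qed.

Lemma card_block (alpha : seq nat) i : i < size alpha ->
  #|[set j : 'I_(sumn alpha) | in_block alpha i j]| = nth 0 alpha i.
Proof.
move=> isz; rewrite card_ord_pred /in_block count_interval; last by rewrite -psum_size psum_mono.
by rewrite psumS addKn.
Qed.

Lemma Lstar_Ostar d (P : finPOrderType d) (alpha : seq nat) (w : P -> 'I_(sumn alpha))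
  (s : {perm 'I_(sumn alpha)}) :
  bijective w -> all (fun a => 0 < a) alpha -> Lstar w alpha s -> Ostar alpha (fsig w alpha s).
Proof.
move=> [w' ww' w'w] hpos [lin uni umin].
have fib : forall i, i < size alpha -> [set x | fsig w alpha s x == i] = Pblock w alpha s i.
  by move=> i isz; rewrite Pblock_fiber //; apply/setP => x; rewrite !inE ffunE.
split.
- by move=> x; rewrite ffunE; case: (blk_spec (ltn_ord ((s^-1)%g (w x)))).
- move=> i isz; have [h1 h2] := psum_lt_sum hpos isz.
  have an : psum alpha i < sumn alpha by apply: leq_trans h2.
  exists (w' (s (Ordinal an))); rewrite ffunE w'w permK; apply: blk_eq => //.
  by rewrite /in_block /= leqnn.
- move=> x y; rewrite le_eqVlt => /orP[/eqP->|/lin h]; first by [].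
  by rewrite !ffunE; apply: blk_mono (ltnW h) (ltn_ord _).
- move=> i isz; rewrite fib // Pblock_fiber // -card_block //.
  rewrite -(card_imset _ (inj_comp (@perm_inj _ (s^-1)%g) (can_inj ww'))).
  apply: eq_card => j; rewrite inE; apply/imsetP/idP.
    case=> x; rewrite inE => /eqP <- ->.
    by case: (blk_spec (ltn_ord ((s^-1)%g (w x)))).
  move=> hj; exists (w' (s j)); last by rewrite /= w'w permK.
  by rewrite inE w'w permK; apply/eqP/blk_eq.
- by move=> i isz; rewrite fib //; apply: umin.
Qed.

Lemma Ostar_surj d (P : finPOrderType d) (alpha : seq nat) (w : P -> 'I_(sumn alpha))
  (f : {ffun P -> nat}) :
  bijective w -> naturally_labeled w -> all (fun a => 0 < a) alpha -> Ostar alpha f ->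
  exists s, Lstar w alpha s /\ fsig w alpha s = f.
Proof.
move=> [w' ww' w'w] natl hpos [frng fsurj fmono fcard fmin].
pose cnt x := #|[set y | (f y == f x) && (w y < w x)]|.
pose pi x := psum alpha (f x) + cnt x.
have H1 : forall x, cnt x < nth 0 alpha (f x).
  move=> x; rewrite -fcard //; apply: proper_card; apply/properP; split.
    by apply/subsetP => y; rewrite !inE => /andP[].
  by exists x; rewrite !inE ?eqxx ?ltnn.
have H2 : forall x, in_block alpha (f x) (pi x).
  by move=> x; rewrite /in_block /pi leq_addr psumS ltn_add2l H1.
have H3 : forall x, pi x < sumn alpha.
  move=> x; have /andP[_ h] := H2 x; apply: leq_trans h _.
  by rewrite -psum_size psum_mono.
have H4 : forall x, blk alpha (pi x) = f x by move=> x; apply: blk_eq.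
have H5 : forall x y, f x = f y -> w x < w y -> pi x < pi y.
  move=> x y fxy wxy; rewrite /pi fxy ltn_add2l; apply: proper_card; apply/properP; split.
    apply/subsetP => z; rewrite !inE fxy => /andP[-> h] /=; exact: ltn_trans h wxy.
  by exists x; rewrite !inE fxy eqxx /= ?ltnn.
have H6 : forall x y, f x < f y -> pi x < pi y.
  move=> x y fxy; have /andP[_ h1] := H2 x; have /andP[h2 _] := H2 y.
  by apply: leq_trans h1 (leq_trans (psum_mono _ fxy) h2).
have H7 : forall x y, pi x = pi y -> x = y.
  move=> x y e; have fxy : f x = f y by rewrite -H4 e H4.
  case: (ltngtP (w x) (w y)) => [h|h|h].
  - by have := H5 _ _ fxy h; rewrite e ltnn.
  - by have := H5 _ _ (esym fxy) h; rewrite e ltnn.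
  - by apply: (can_inj ww'); apply: val_inj.
pose g := fun L : 'I_(sumn alpha) => Ordinal (H3 (w' L)).
have ginj : injective g.
  by move=> L1 L2 /(congr1 val) /= /H7 /(can_inj w'w).
pose s := ((perm ginj)^-1)%g.
have key : forall x, val ((s^-1)%g (w x)) = pi x.
  by move=> x; rewrite /s invgK permE /= ww'.
exists s; split; last first.
  by apply/ffunP => x; rewrite ffunE key H4.
split.
- move=> x y xy; rewrite !key; have := fmono _ _ (ltW xy).
  rewrite leq_eqVlt => /orP[/eqP e|]; last exact: H6.
  by apply: H5 => //; apply: natl.
- move=> i isz; have [h1 h2] := psum_lt_sum hpos isz.
  exists (psum alpha i); split => //.
    by move=> j hj1 hj2; move: (leq_ltn_trans hj1 hj2); rewrite ltnn.
  move=> j hj1 hj2.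
  have en : psum alpha i.+1 <= sumn alpha by rewrite -psum_size psum_mono.
  have jn1 : j.+1 < sumn alpha by apply: leq_trans hj2 en.
  have jn : j < sumn alpha by apply: ltn_trans jn1.
  pose J1 := Ordinal jn; pose J2 := Ordinal jn1.
  have -> : j = val J1 by []; have -> : j.+1 = val J2 by [].
  rewrite !wordE.
  have p1 : pi (w' (s J1)) = j by rewrite -key w'w permK.
  have p2 : pi (w' (s J2)) = j.+1 by rewrite -key w'w permK.
  have f1 : f (w' (s J1)) = i by rewrite -H4 p1; apply: blk_eq; rewrite // /in_block hj1 ltnW.
  have f2 : f (w' (s J2)) = i by rewrite -H4 p2; apply: blk_eq; rewrite // /in_block hj2 andbT ltnW.
  case: (ltngtP (w (w' (s J1))) (w (w' (s J2)))) => [|h|h]; first by rewrite !w'w.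
  - by have := H5 _ _ (etrans f2 (esym f1)) h; rewrite p1 p2 ltnNge leqnSn.
  - by have := congr1 pi (can_inj ww' (val_inj h)); rewrite p1 p2 => /n_Sn.
- move=> i isz; rewrite Pblock_fiber //.
  have -> : [set x | blk alpha ((s^-1)%g (w x)) == i] = [set x | f x == i].
    by apply/setP => x; rewrite !inE key H4.
  exact: fmin.
Qed.

Theorem proposition5p1 (d : Order.disp_t) (P : finPOrderType d) (n : nat)
    (w : P -> 'I_n) (alpha : seq nat) :
  bijective w -> naturally_labeled w -> is_composition n alpha ->
  [/\ (forall s, Lstar w alpha s -> Ostar alpha (fsig w alpha s)),
      (forall s1 s2, Lstar w alpha s1 -> Lstar w alpha s2 ->
         fsig w alpha s1 = fsig w alpha s2 -> s1 = s2) &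
      (forall f, Ostar alpha f -> exists s, Lstar w alpha s /\ fsig w alpha s = f)].
Proof.
move=> bw nl [hpos hsum]; subst n; split.
- by move=> s; apply: Lstar_Ostar.
- by move=> s1 s2; apply: Lstar_inj.
- by move=> f; apply: Ostar_surj.
Qed.
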